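(* Let $0<a<1$, $a_N=a\ln N/N$, and let $S=S(N)$ be integers with $N+S(N)\ge0$ and $S=o(N/\ln N)$. For integers $K\ge0$ let $\langle n_0\rangle_{K,a_N}$ denote the expectation of $n_0$ under the probability on sequences $(n_j)_{j\ge0}$ of nonnegative integers with $\sum_jn_j=K$ proportional to $e^{-a_N\sum_jjn_j}$. Then $$\lim_{N\to\infty}N^{-a}\langle n_0\rangle_{N+S,a_N}=1 .$$
   Context: This is the canonical ensemble of $N+S$ noninteracting bosons in a one-dimensional harmonic trap whose scaled level spacing parameter is $a_N$. *)

(* Defs.v *)
From HB Require Import structures.
From mathcomp Require Import all_boot all_order all_algebra.
From mathcomp Require Import all_classical all_reals all_analysis.
Unset Printing Implicit Defensive.
Import Order.TTheory GRing.Theory Num.Theory.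
Import numFieldNormedType.Exports.
Local Open Scope ring_scope.

(* Any
   configuration of energy E has n_j = 0 for j > E and n_j <= K, so the
   configurations of particle number K and energy E are exactly the finite
   functions n : 'I_E.+1 -> 'I_K.+1 (levels 0..E, occupations 0..K) with
   sum n = K and sum j n_j = E (extended by 0 beyond level E). *)
Definition config (K E : nat) (n : {ffun 'I_E.+1 -> 'I_K.+1}) : bool :=
  ((\sum_(j < E.+1) (n j : nat))%N == K) &&
  ((\sum_(j < E.+1) (j : nat) * (n j : nat))%N == E).

Definition ncfg (K E : nat) : nat := #|[pred n | config K E n]|.

Definition n0cfg (K E : nat) : nat :=
  (\sum_(n : {ffun 'I_E.+1 -> 'I_K.+1} | config K E n) (n ord0 : nat))%N.

(* canonical partition function Z_K(a) = sum over configurations of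
   exp(-a * sum_j j n_j), summed energy shell by energy shell *)
Definition Zcan {R : realType} (K : nat) (a : R) : R :=
  limn (fun M => \sum_(0 <= E < M) ((ncfg K E)%:R * expR (- a * E%:R))).

Definition N0can {R : realType} (K : nat) (a : R) : R :=
  limn (fun M => \sum_(0 <= E < M) ((n0cfg K E)%:R * expR (- a * E%:R))).

Definition mean_n0 {R : realType} (K : nat) (a : R) : R := N0can K a / Zcan K a.

(* Main.v *)
Require Import Defs.
From HB Require Import structures.
From mathcomp Require Import all_boot all_order all_algebra.
From mathcomp Require Import all_classical all_reals all_analysis.
From mathcomp Require Import zify ring lra.
Import Order.TTheory GRing.Theory Num.Theory.
Import numFieldNormedType.Exports.
Local Open Scope classical_set_scope.
Local Open Scope ring_scope.

Definition tot {D M} (n : {ffun 'I_D -> 'I_M}) : nat := (\sum_(j < D) (n j : nat))%N.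
Definition en {D M} (n : {ffun 'I_D -> 'I_M}) : nat := (\sum_(j < D) (j : nat) * (n j : nat))%N.
Definition G D K E : nat :=
  (\sum_(n : {ffun 'I_D -> 'I_K.+1} | (tot n == K) && (en n == E)) 1)%N.

Lemma ncfgE K E : ncfg K E = G E.+1 K E.
Proof. by rewrite /ncfg /G -sum1_card; apply: eq_bigl => n; rewrite inE. Qed.

Lemma G_dom D K E : (E < D)%N -> G D.+1 K E = G D K E.
Proof.
move=> ED; rewrite /G.
pose ext (m : {ffun 'I_D -> 'I_K.+1}) : {ffun 'I_D.+1 -> 'I_K.+1} :=
  [ffun j => if unlift ord_max j is Some i then m i else ord0].
pose hd (n : {ffun 'I_D.+1 -> 'I_K.+1}) : {ffun 'I_D -> 'I_K.+1} :=
  [ffun i => n (widen_ord (leqnSn D) i)].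
have lw (i : 'I_D) : lift ord_max i = widen_ord (leqnSn D) i by apply: val_inj; exact: lift_max.
have extL m i : ext m (widen_ord (leqnSn D) i) = m i by rewrite ffunE -lw liftK.
have extM m : ext m ord_max = ord0 by rewrite ffunE unlift_none.
have totE m : tot (ext m) = tot m.
  rewrite /tot big_ord_recr /= extM addn0; apply: eq_bigr => i _; by rewrite extL.
have enE m : en (ext m) = en m.
  rewrite /en big_ord_recr /= extM muln0 addn0; apply: eq_bigr => i _; by rewrite extL.
rewrite (reindex ext); last first.
  exists hd => [m _|n]; first by apply/ffunP => i; rewrite ffunE extL.
  rewrite inE => /andP [_ /eqP enn].
  apply/ffunP => j; rewrite ffunE; case: unliftP => [i ->|->].
    by rewrite ffunE lw.
  apply: val_inj => /=.
  have : (D * n ord_max <= E)%N by rewrite -enn /en big_ord_recr /= leq_addl.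
  move=> h; apply/esym/eqP; rewrite -leqn0 leqNgt; apply/negP => pos.
  by have := leq_trans (leq_pmulr D pos) h; rewrite leqNgt ED.
under eq_bigl => m do rewrite totE enE.
by [].
Qed.

Lemma G_dom_gen d K E : G (E.+1 + d) K E = G E.+1 K E.
Proof.
elim: d => [|d IH]; first by rewrite addn0.
by rewrite addnS G_dom // ltn_addr.
Qed.

Lemma shift0 K E D :
  (\sum_(n : {ffun 'I_D.+1 -> 'I_K.+1} | (tot n == K) && (en n == E) && ~~ (0 < n ord0)%N) 1 =
   \sum_(m : {ffun 'I_D -> 'I_K.+1} | (tot m == K) && (en m + K == E)) 1)%N.
Proof.
pose ext (m : {ffun 'I_D -> 'I_K.+1}) : {ffun 'I_D.+1 -> 'I_K.+1} :=
  [ffun j => if unlift ord0 j is Some i then m i else ord0].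
pose tl (n : {ffun 'I_D.+1 -> 'I_K.+1}) : {ffun 'I_D -> 'I_K.+1} :=
  [ffun i => n (lift ord0 i)].
have extL m i : ext m (lift ord0 i) = m i by rewrite ffunE liftK.
have ext0 m : ext m ord0 = ord0 by rewrite ffunE unlift_none.
have totE m : tot (ext m) = tot m.
  rewrite /tot big_ord_recl /= ext0 add0n; apply: eq_bigr => i _; by rewrite extL.
have enE m : en (ext m) = (en m + tot m)%N.
  rewrite /en /tot big_ord_recl /= ext0 mul0n add0n -big_split /=.
  apply: eq_bigr => i _; rewrite extL /bump leq0n add1n mulSn; lia.
rewrite (reindex ext); last first.
  exists tl => [m _|n]; first by apply/ffunP => i; rewrite ffunE extL.
  rewrite inE => /andP [_ hn0].
  apply/ffunP => j; rewrite ffunE; case: unliftP => [i ->|->].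
    by rewrite ffunE.
  apply: val_inj => /=; move: hn0; rewrite -leqNgt leqn0 => /eqP ->; done.
apply: eq_bigl => m; rewrite totE enE ext0 /= andbT.
by case: eqP => // ->.
Qed.

Definition inc {k D} (m : {ffun 'I_D.+1 -> 'I_k.+1}) : {ffun 'I_D.+1 -> 'I_k.+2} :=
  [ffun j => inord (m j + (j == ord0))].

Lemma incE k D (m : {ffun 'I_D.+1 -> 'I_k.+1}) j : (inc m j : nat) = (m j + (j == ord0))%N :> nat.
Proof. rewrite /inc ffunE inordK //; have := ltn_ord (m j); case: (j == ord0) => /=; lia. Qed.

Lemma tot_pos k D (n : {ffun 'I_D.+1 -> 'I_k}) j : j != ord0 -> (n j + n ord0 <= tot n)%N.
Proof.
move=> j0; rewrite /tot (bigD1 ord0) //= (bigD1 j) //=; lia.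
Qed.

Lemma split_pos k D E (F : {ffun 'I_D.+1 -> 'I_k.+2} -> nat) :
  (\sum_(n | (tot n == k.+1) && (en n == E) && (0 < n ord0)%N) F n =
  \sum_(m : {ffun 'I_D.+1 -> 'I_k.+1} | (tot m == k) && (en m == E)) F (inc m))%N.
Proof.
pose dec (n : {ffun 'I_D.+1 -> 'I_k.+2}) : {ffun 'I_D.+1 -> 'I_k.+1} :=
  [ffun j => inord (n j - (j == ord0))].
have totE m : tot (inc m) = (tot m).+1.
  rewrite /tot !big_ord_recl incE eqxx.
  rewrite (eq_bigr (fun i => (m (lift ord0 i) : nat))); first by rewrite addn1 addSn.
  by move=> i _; rewrite incE eq_sym (negbTE (neq_lift _ _)) addn0.
have enE m : en (inc m) = en m.
  rewrite /en; apply: eq_bigr => j _; rewrite incE.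
  by case: (eqVneq j ord0) => [->|_]; rewrite ?mul0n ?addn0.
rewrite (reindex inc); last first.
  exists dec => [m _|n].
    apply/ffunP => j; rewrite !ffunE; apply: val_inj => /=.
    have hb : (m j + (j == ord0) < k.+2)%N by have := ltn_ord (m j); case: (j == ord0); lia.
    by rewrite [X in (X - _)%N]inordK // addnK inordK.
  rewrite inE => /andP [/andP [/eqP tn _] n0].
  apply/ffunP => j; apply: val_inj => /=; rewrite incE ffunE inordK.
    case: (eqVneq j ord0) => [->|_] /=; last by rewrite !subn0 addn0.
    by rewrite subnK.
  case: (eqVneq j ord0) => [->|j0] /=.
    by rewrite subn1 -ltnS (ltn_predK n0); exact: ltn_ord.
  have := @tot_pos _ _ n j j0; rewrite tn subn0 => h; apply: leq_trans h; by rewrite -addn1 leq_add2l.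
apply: eq_bigl => m; rewrite totE enE incE eqxx addn1 /=.
by rewrite andbT eqSS.
Qed.

Lemma ncfg_rec k E : ncfg k.+1 E =
  (ncfg k E + (if (k.+1 <= E)%N then ncfg k.+1 (E - k.+1) else 0))%N.
Proof.
rewrite !ncfgE /G (bigID (fun n : {ffun 'I_E.+1 -> 'I_k.+2} => 0 < n ord0)%N) /= split_pos; congr (_ + _)%N.
rewrite shift0; case: ifP => kE.
  have -> : (\sum_(m : {ffun 'I_E -> 'I_k.+2} | (tot m == k.+1) && ((en m + k.+1)%N == E)) 1)%N = G E k.+1 (E - k.+1)%N.
    rewrite /G; apply: eq_bigl => m.
    by case: (tot m == k.+1) => //=; apply/eqP/eqP; lia.
  have hE : G E k.+1 (E - k.+1)%N = G ((E - k.+1).+1 + k)%N k.+1 (E - k.+1)%N by congr G; lia.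
  by rewrite hE G_dom_gen.
by apply: big_pred0 => m; case: (tot m == k.+1) => //=; apply/eqP; lia.
Qed.

Lemma n0cfg_rec k E : n0cfg k.+1 E = (n0cfg k E + ncfg k E)%N.
Proof.
rewrite /n0cfg ncfgE /G.
rewrite (bigID (fun n : {ffun 'I_E.+1 -> 'I_k.+2} => 0 < n ord0)%N) /=.
rewrite [X in (_ + X)%N]big1 ?addn0; last by move=> n /andP [_]; rewrite -leqNgt leqn0 => /eqP.
rewrite (split_pos k E E (fun n => n ord0 : nat)).
rewrite -big_split /=; apply: eq_bigr => m _; by rewrite incE eqxx addn1.
Qed.

Lemma ncfg0 E : ncfg 0 E = (E == 0)%N.
Proof.
rewrite ncfgE /G.
have z (n : {ffun 'I_E.+1 -> 'I_1}) j : (n j : nat) = 0%N by rewrite (ord1 (n j)).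
have t (n : {ffun 'I_E.+1 -> 'I_1}) : tot n = 0%N by rewrite /tot big1 // => j _; exact: z.
have e (n : {ffun 'I_E.+1 -> 'I_1}) : en n = 0%N by rewrite /en big1 // => j _; rewrite z muln0.
case: (eqVneq E 0%N) => [E0|E0].
  rewrite sum1_card.
  have -> : #|[pred n : {ffun 'I_E.+1 -> 'I_1} | (tot n == 0%N) && (en n == E)]| = #|{ffun 'I_E.+1 -> 'I_1}|.
    by apply: eq_card => n; rewrite !inE t e E0.
  by rewrite card_ffun card_ord exp1n.
by rewrite big_pred0 // => n; rewrite t e eq_sym (negbTE E0) andbF.
Qed.

Lemma n0cfg0 E : n0cfg 0 E = 0%N.
Proof. by rewrite /n0cfg big1 // => n _; rewrite (ord1 (n ord0)). Qed.

Definition zs {R : realType} (x : R) K : nat -> R :=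
  fun M => \sum_(0 <= E < M) ((ncfg K E)%:R * expR (- x * E%:R)).
Definition ws {R : realType} (x : R) K : nat -> R :=
  fun M => \sum_(0 <= E < M) ((n0cfg K E)%:R * expR (- x * E%:R)).

Lemma mean_n0E {R : realType} (x : R) K : mean_n0 K x = limn (ws x K) / limn (zs x K).
Proof. by []. Qed.

Lemma limnE {R : realType} (u : nat -> R) l : u @ \oo --> l -> limn u = l.
Proof. move=> h; exact: cvg_lim h. Qed.
Arguments limnE {R u l}.

Lemma zs_rec {R : realType} (x : R) k M :
  zs x k.+1 (M + k.+1) = zs x k (M + k.+1) + expR (- x * k.+1%:R) * zs x k.+1 M.
Proof.
rewrite /zs; under eq_bigr => E _ do rewrite ncfg_rec natrD mulrDl.
rewrite big_split /=; congr (_ + _).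
rewrite (@big_cat_nat _ _ _ k.+1 0 (M + k.+1)) ?leq_addl //=.
rewrite big_nat_cond big1 ?add0r; last first.
  by move=> E /andP [/andP [_ hE] _]; rewrite leqNgt hE /= mul0r.
rewrite (big_addn 0 (M + k.+1) k.+1) addnK mulr_sumr; apply: eq_bigr => E _.
rewrite leq_addl addnK natrD mulrDr expRD; ring.
Qed.

Lemma zs_nd {R : realType} (x : R) k : {homo zs x k : n m / (n <= m)%N >-> n <= m}.
Proof.
move=> n m nm; rewrite /zs (@big_cat_nat _ _ _ n 0 m) //= lerDl.
by apply: sumr_ge0 => E _; rewrite mulr_ge0 // expR_ge0.
Qed.

Lemma zs_eq {R : realType} (x : R) k : cvgn (zs x k) -> cvgn (zs x k.+1) ->
  limn (zs x k.+1) = limn (zs x k) + expR (- x * k.+1%:R) * limn (zs x k.+1).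
Proof.
move=> c0 c1.
have h1 : (fun M => zs x k.+1 (M + k.+1)) @ \oo --> limn (zs x k.+1).
  by rewrite (cvg_shiftn k.+1).
have h2 : (fun M => zs x k (M + k.+1) + expR (- x * k.+1%:R) * zs x k.+1 M) @ \oo -->
    limn (zs x k) + expR (- x * k.+1%:R) * limn (zs x k.+1).
  apply: cvgD; first by rewrite (cvg_shiftn k.+1 (zs x k)).
  exact: cvgMl_tmp.
have := limnE h1; rewrite (funext (fun M => zs_rec x k M)) (limnE h2) //.
Qed.

Lemma zs0 {R : realType} (x : R) : zs x 0 @ \oo --> (1 : R).
Proof.
rewrite -(cvg_shiftn 1%N).
have -> : (fun n => zs x 0 (n + 1)%N) = (fun=> 1).
  apply: funext => n; rewrite /zs addn1 big_nat_recl // ncfg0 /= mulr0 expR0 mulr1.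
  by rewrite big1 ?addr0 // => E _; rewrite ncfg0 /= mul0r.
exact: cvg_cst.
Qed.

Lemma zs_main {R : realType} (x : R) : 0 < x -> forall k, cvgn (zs x k) /\ 0 < limn (zs x k).
Proof.
move=> x0; elim=> [|k [c0 p0]].
  split; first by apply/cvg_ex; exists 1; exact: zs0.
  by rewrite (limnE (zs0 x)).
set q := expR (- x * k.+1%:R).
have q1 : q < 1 by rewrite /q -expR0 ltr_expR mulNr oppr_lt0 mulr_gt0 // ltr0Sn.
have q0 : 0 < q by rewrite /q expR_gt0.
have c1 : cvgn (zs x k.+1).
  apply: nondecreasing_is_cvgn; first exact: zs_nd.
  exists (limn (zs x k) / (1 - q)) => _ [M _ <-].
  have h := zs_rec x k M.
  have a1 : zs x k.+1 M <= zs x k.+1 (M + k.+1) by apply: zs_nd; exact: leq_addr.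
  have a2 : zs x k (M + k.+1) <= limn (zs x k) by apply: nondecreasing_cvgn_le => //; exact: zs_nd.
  rewrite ler_pdivlMr ?subr_gt0 //.
  rewrite -/q in h; nra.
have e := zs_eq _ _ c0 c1; rewrite -/q in e.
split => //; nra.
Qed.

Lemma ws_rec {R : realType} (x : R) k M : ws x k.+1 M = ws x k M + zs x k M.
Proof.
by rewrite /ws /zs -big_split /=; apply: eq_bigr => E _; rewrite n0cfg_rec natrD mulrDl.
Qed.

Lemma ws0 {R : realType} (x : R) M : ws x 0 M = 0.
Proof. by rewrite /ws big1 // => E _; rewrite n0cfg0 mul0r. Qed.

Lemma ws_main {R : realType} (x : R) : 0 < x -> forall k, cvgn (ws x k) /\ limn (ws x k.+1) = limn (ws x k) + limn (zs x k).
Proof.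
move=> x0.
have cz k : cvgn (zs x k) by case: (zs_main x x0 k).
have cw : forall k, cvgn (ws x k).
  elim=> [|k IH].
    have -> : ws x 0 = fun=> 0 by apply: funext => M; rewrite ws0.
    by apply/cvg_ex; exists 0; exact: cvg_cst.
  rewrite (_ : ws x k.+1 = ws x k + zs x k); last by apply: funext => M; rewrite ws_rec.
  by apply/cvg_ex; exists (limn (ws x k) + limn (zs x k)); apply: cvgD.
move=> k; split => //.
rewrite (_ : ws x k.+1 = ws x k + zs x k); last by apply: funext => M; rewrite ws_rec.
by apply: limnE; apply: cvgD.
Qed.

Lemma mean_rec {R : realType} (x : R) k : 0 < x ->
  mean_n0 k.+1 x = (1 - expR (- x * k.+1%:R)) * (1 + mean_n0 k x).
Proof.
move=> x0; rewrite !mean_n0E.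
have [c0 p0] := zs_main x x0 k.
have [c1 p1] := zs_main x x0 k.+1.
have e := zs_eq _ _ c0 c1.
have [_ ew] := ws_main x x0 k.
rewrite ew.
set q := expR (- x * k.+1%:R) in e *.
set Z0 := limn (zs x k) in e p0 *.
set Z1 := limn (zs x k.+1) in e p1 *.
have -> : Z0 = (1 - q) * Z1 by rewrite mulrBl mul1r; lra.
have q1 : q < 1 by rewrite /q -expR0 ltr_expR mulNr oppr_lt0 mulr_gt0 // ltr0Sn.
have hZ1 : Z1 != 0 by rewrite gt_eqF.
have hq : 1 - q != 0 by rewrite gt_eqF // subr_gt0.
field.
by rewrite hZ1 hq.
Qed.

Lemma mean0 {R : realType} (x : R) : mean_n0 0 x = 0.
Proof.
rewrite mean_n0E (_ : ws x 0 = fun=> 0); last by apply: funext => M; rewrite ws0.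
by rewrite (limnE (cvg_cst 0)) mul0r.
Qed.


Lemma g_ge0 (R : realType) (q : R) (g : nat -> R) (q0 : 0 <= q) (q1 : q <= 1) (g0 : g 0%N = 0) (gS : forall k, g k.+1 = (1 - q ^+ k.+1) * (1 + g k)) K : 0 <= g K.
Proof.
elim: K => [|K IH]; first by rewrite g0.
rewrite gS mulr_ge0 //; last by lra.
by rewrite subr_ge0 exprn_ile1.
Qed.

Lemma g_up (R : realType) (q : R) (g : nat -> R) (q0 : 0 <= q) (q1 : q <= 1) (g0 : g 0%N = 0) (gS : forall k, g k.+1 = (1 - q ^+ k.+1) * (1 + g k)) K : q ^+ K * g K <= 1 - q ^+ K.
Proof.
elim: K => [|K IH]; first by rewrite g0 expr0 mulr0 subrr.
rewrite gS.
have h1 : 0 <= 1 - q ^+ K.+1 by rewrite subr_ge0 exprn_ile1.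
have h2 : q ^+ K * (1 + g K) <= 1 by lra.
have h3 : 0 <= q ^+ K by rewrite exprn_ge0.
rewrite exprS.
have -> : q * q ^+ K * ((1 - q * q ^+ K) * (1 + g K)) = (q * (1 - q * q^+K)) * (q ^+ K * (1 + g K)) by ring.
have h4 : 0 <= q * (1 - q * q^+K) by rewrite mulr_ge0 // -exprS.
apply: le_trans (ler_pM h4 _ (lexx _) h2) _.
  by rewrite mulr_ge0 //; have := @g_ge0 _ _ _ q0 q1 g0 gS K; lra.
rewrite mulr1 -exprS.
have h5 : 0 <= (1 - q) * (1 - q^+K.+1). by apply: mulr_ge0; rewrite // subr_ge0.
nra.
Qed.

Lemma g_low (R : realType) (q : R) (g : nat -> R) (q0 : 0 <= q) (q1 : q <= 1) (g0 : g 0%N = 0) (gS : forall k, g k.+1 = (1 - q ^+ k.+1) * (1 + g k)) J i : (1 - q ^+ J) * (1 - (1 - q ^+ J) ^+ i) <= q ^+ J * g (J + i)%N.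
Proof.
set s := q ^+ J.
have s0 : 0 <= s by rewrite exprn_ge0.
have s1 : s <= 1 by rewrite exprn_ile1.
elim: i => [|i IH]; first by rewrite expr0 subrr mulr0 ?addn0 mulr_ge0 // (@g_ge0 _ _ _ q0 q1 g0 gS).
rewrite addnS gS.
have hq : q ^+ (J + i)%N.+1 <= s.
  rewrite /s -addnS exprD -[X in _ <= X]mulr1; apply: ler_wpM2l; [exact: exprn_ge0 | exact: exprn_ile1].
have e1 : 0 <= 1 - s by lra.
have e2 : 1 - s <= 1 - q ^+ (J + i)%N.+1 by lra.
have e3 : (1 - s) ^+ i <= 1 by apply: exprn_ile1 => //; lra.
have e4 : 0 <= s + (1 - s) * (1 - (1 - s) ^+ i) by rewrite addr_ge0 // mulr_ge0 // subr_ge0.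
have e5 : s + (1 - s) * (1 - (1 - s) ^+ i) <= s * (1 + g (J + i)%N) by rewrite mulrDr mulr1; lra.
have := ler_pM e1 e4 e2 e5.
have -> : (1 - s) * (s + (1 - s) * (1 - (1 - s) ^+ i)) = (1 - s) * (1 - (1 - s) ^+ i.+1).
  by rewrite exprS; ring.
move=> h; apply: le_trans h _; rewrite le_eqVlt; apply/orP; left; apply/eqP; ring.
Qed.


Lemma bern (R : realType) (t : R) L : 0 <= t -> t <= 1 -> (1 - t) ^+ L * (1 + L%:R * t) <= 1.
Proof.
move=> t0 t1; elim: L => [|L IH]; first by rewrite expr0 mul0r addr0 mulr1.
rewrite exprS -mulrA.
have h0 : 0 <= (1 - t) ^+ L by rewrite exprn_ge0 // subr_ge0.
have : (1 - t) * (1 + L.+1%:R * t) <= 1 + L%:R * t.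
  rewrite -natr1; have : 0 <= L%:R * t * t by rewrite mulr_ge0 // mulr_ge0.
  have : 0 <= t * t by rewrite mulr_ge0.
  nra.
move=> h; apply: le_trans _ IH; rewrite mulrCA; exact: ler_wpM2l h0 _ _ h.
Qed.

Lemma expRNK {R : realType} (z : R) : expR (- z) * expR z = 1.
Proof. by rewrite expRN mulVf // gt_eqF // expR_gt0. Qed.

Lemma yexp {R : realType} (c y : R) : 0 < c -> 0 < y ->
  y * expR (- (c * y)) <= 4 / (c ^+ 2 * y).
Proof.
move=> c0 y0.
have e : expR (c * y) = expR (c * y / 2) ^+ 2.
  by rewrite expr2 -expRD; congr expR; field.
have h1 : c * y / 2 <= expR (c * y / 2).
  by apply: le_trans (expR_ge1Dx _); lra.
have h2 : (c * y / 2) ^+ 2 <= expR (c * y) by rewrite e lerXn2r // nnegrE ?expR_ge0 // divr_ge0 // mulr_ge0 // ltW.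
have cy : 0 < c * y by rewrite mulr_gt0.
rewrite ler_pdivlMr ?mulr_gt0 ?exprn_gt0 //.
have -> : y * expR (- (c * y)) * (c ^+ 2 * y) = (c * y) ^+ 2 * expR (- (c * y)).
  by rewrite exprMn expr2 expr2; ring.
have hE := expRNK (c * y).
have hpos : 0 < expR (- (c * y)) by rewrite expR_gt0.
have h3 : (c * y / 2) ^+ 2 * expR (- (c * y)) <= 1.
  by rewrite -[X in _ <= X]hE [X in _ <= X]mulrC ler_pM2r.
have -> : (c * y) ^+ 2 * expR (- (c * y)) = 4 * ((c * y / 2) ^+ 2 * expR (- (c * y))) by field.
lra.
Qed.

Lemma expR_small {R : realType} (d : R) : 0 <= d -> d <= 1/4 -> expR d <= 1 + 2 * d.
Proof.
move=> d0 d1.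
have h := expRNK (-d); rewrite opprK in h.
have h1 : 1 - d <= expR (- d) by have := expR_ge1Dx (- d); lra.
have h2 : 0 < expR d by exact: expR_gt0.
nra.
Qed.


Lemma stepA {R : realType} (a d y u xk : R) :
  0 < d -> d <= 1/4 -> 1/d + 1 <= a * y -> - d <= u -> xk = a * y + u ->
  [/\ 1/d <= xk, d < xk, 1 <= expR xk & expR (- xk) <= d].
Proof.
move=> d0 d1 ay u1 xK.
have dD : d * (1/d) = 1 by rewrite mul1r mulfV // gt_eqF.
have D4 : 4 <= 1/d by rewrite ler_pdivlMr //; lra.
have xK1 : 1/d <= xk by rewrite xK; lra.
have t0 : 0 < expR (- xk) by exact: expR_gt0.
have tE : expR (- xk) * expR xk = 1 by exact: expRNK.
have hE1 : 1 + xk <= expR xk := expR_ge1Dx _.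
split => //; try lra.
have h : expR (- xk) * (1/d) <= 1.
  rewrite -[X in _ <= X]tE; apply: ler_wpM2l; first exact: ltW.
  lra.
have : expR (- xk) * (1/d) * d <= 1 * d by rewrite ler_pM2r.
by rewrite -mulrA [(1/d) * d]mulrC dD mul1r mulr1.
Qed.

Arguments stepA {R a d y u xk}.

Lemma stepRho {R : realType} (a d y u x xk : R) :
  0 < a -> a < 1 -> 0 < d -> d <= 1/4 -> 0 < y -> u <= d ->
  16 * a / ((1 - a) ^+ 2 * d ^+ 2) <= y ->
  x = a * y * expR (- y) -> xk = a * y + u -> x * expR xk <= d ^+ 2 / 2.
Proof.
move=> a0 a1 d0 d1 y0 u2 hY2 xE xK.
set c := 1 - a.
have c0 : 0 < c by rewrite /c subr_gt0.
have eK : expR xk = expR (a * y) * expR u by rewrite xK expRD.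
have rho_eq : x * expR xk = a * (y * expR (- (c * y))) * expR u.
  have -> : expR (- (c * y)) = expR (- y) * expR (a * y) by rewrite -expRD /c; congr expR; ring.
  by rewrite eK xE; ring.
have B1 := yexp c y c0 y0.
have eu2 : expR u <= 1 + 2 * d.
  apply: le_trans (expR_small d (ltW d0) d1); by rewrite ler_expR.
rewrite rho_eq.
have w0 : 0 <= y * expR (- (c * y)) by rewrite mulr_ge0 ?expR_ge0 // ltW.
have h1 : a * (y * expR (- (c * y))) * expR u <= a * (4 / (c ^+ 2 * y)) * 2.
  apply: ler_pM.
  - exact: mulr_ge0 (ltW a0) w0.
  - exact: expR_ge0.
  - exact: ler_wpM2l (ltW a0) _ _ B1.
  - lra.
apply: le_trans h1 _.
have cy : 0 < c ^+ 2 * y by rewrite mulr_gt0 // exprn_gt0.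
have -> : a * (4 / (c ^+ 2 * y)) * 2 = (16 * a / (c ^+ 2 * y)) / 2.
  by field; rewrite (lt0r_neq0 y0) (lt0r_neq0 c0).
rewrite ler_pM2r // ler_pdivrMr //.
rewrite ler_pdivrMr ?mulr_gt0 ?exprn_gt0 // in hY2.
rewrite /c; apply: le_trans hY2 _; rewrite le_eqVlt; apply/orP; left; apply/eqP; ring.
Qed.

Arguments stepRho {R a d y u x xk}.

Lemma stepL {R : realType} (x d t E Lr : R) :
  0 < x -> 0 < d -> d <= 1/4 -> 0 < t -> x / t = x * E -> 1 <= E ->
  x * E <= d ^+ 2 / 2 -> 1 / (d * t) < Lr -> Lr <= 1 / (d * t) + 1 ->
  1 / d <= t * Lr /\ x * Lr <= d.
Proof.
move=> x0 d0 d1 t0 xt Eg1 rho hL1 hL2; split.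
  have : t * (1 / (d * t)) <= t * Lr by rewrite ler_pM2l // ltW.
  have -> : t * (1 / (d * t)) = 1 / d by field; rewrite (lt0r_neq0 t0) (lt0r_neq0 d0).
  by [].
have h1 : x * Lr <= x * (1 / (d * t) + 1) by rewrite ler_pM2l.
have h2 : x * (1 / (d * t) + 1) = x * E / d + x.
  by rewrite -xt; field; rewrite (lt0r_neq0 t0) (lt0r_neq0 d0).
have h3 : x <= x * E by rewrite ler_peMr // ltW.
have h4 : x * E / d <= d / 2.
  rewrite ler_pdivrMr //; apply: le_trans rho _.
  by rewrite le_eqVlt; apply/orP; left; apply/eqP; rewrite expr2; field.
have h5 : d ^+ 2 / 2 <= d / 2 by rewrite ler_pM2r // expr2 ler_piMr // ?ltW //; lra.
lra.
Qed.

Arguments stepL {R x d t E Lr}.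

Lemma stepF {R : realType} (d t s qL gK Eu : R) (L : nat) :
  0 < d -> d <= 1/4 -> 0 < t -> t <= d -> t = s * qL -> 1 - d <= qL -> qL <= 1 ->
  0 <= s -> (1 - s) * (1 - (1 - s) ^+ L) <= s * gK -> t * gK <= 1 - t ->
  1 / d <= t * L%:R -> 1 - d <= Eu -> Eu <= 1 + 2 * d ->
  `|1 - Eu * (t * gK)| <= 5 * d.
Proof.
move=> d0 d1 t0 td ts qL1 qLle1 s0 lo up tL eu1 eu2.
have dD : d * (1/d) = 1 by rewrite mul1r mulfV // gt_eqF.
have sd : s * (1 - d) <= t by rewrite ts ler_wpM2l.
have s2 : s <= 2 * d by nra.
have st : t <= s by rewrite ts -[X in _ <= X]mulr1 ler_wpM2l.
have pw : (1 - s) ^+ L <= (1 - t) ^+ L by apply: lerXn2r; rewrite ?nnegrE; lra.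
have d1' : d <= 1 by lra.
have bt := bern _ _ L (ltW t0) (le_trans td d1').
have P0 : 0 <= (1 - t) ^+ L by rewrite exprn_ge0 // subr_ge0; lra.
have ptd : (1 - t) ^+ L <= d.
  have h : (1 - t) ^+ L * (1 / d) <= 1.
    apply: le_trans bt; apply: ler_wpM2l P0 _ _ _; rewrite mulrC; lra.
  have : (1 - t) ^+ L * (1 / d) * d <= 1 * d by rewrite ler_pM2r.
  by rewrite -mulrA [(1/d) * d]mulrC dD mul1r mulr1.
have psd : (1 - s) ^+ L <= d by apply: le_trans pw ptd.
have A : (1 - 2 * d) * (1 - d) <= s * gK.
  apply: le_trans lo; apply: ler_pM; lra.
have lo2 : (1 - d) * ((1 - 2 * d) * (1 - d)) <= t * gK.
  have -> : t * gK = qL * (s * gK) by rewrite ts; ring.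
  apply: ler_pM => //; try lra.
  by apply: mulr_ge0; lra.
have tg1 : t * gK <= 1 by lra.
have tg0 : 0 <= t * gK.
  apply: le_trans lo2; apply: mulr_ge0; [lra | apply: mulr_ge0; lra].
rewrite ler_norml; apply/andP; split.
  have : Eu * (t * gK) <= (1 + 2 * d) * 1 by apply: ler_pM => //; lra.
  lra.
have : (1 - d) * ((1 - d) * ((1 - 2 * d) * (1 - d))) <= Eu * (t * gK).
  apply: ler_pM => //; try lra.
  by apply: mulr_ge0; [lra | apply: mulr_ge0; lra].
have : 0 <= d ^+ 2 * (9 - 7 * d) by apply: mulr_ge0; [exact: sqr_ge0 | lra].
have : 0 <= d ^+ 4 by rewrite exprn_ge0 // ltW.
move=> *; nra.
Qed.

Arguments stepF {R d t s qL gK Eu L}.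

Lemma core {R : realType} (a d Sr : R) (N K : nat) :
  0 < a -> a < 1 -> 0 < d -> d <= 1/4 -> (1 < N)%N ->
  K%:R = N%:R + Sr ->
  `|a * Sr * ln (N%:R : R) / N%:R| <= d ->
  (1/d + 1) / a <= ln (N%:R : R) ->
  16 * a / ((1 - a) ^+ 2 * d ^+ 2) <= ln (N%:R : R) ->
  `|1 - N%:R `^ (- a) * mean_n0 K (a * ln (N%:R : R) / N%:R)| <= 5 * d.
Proof.
move=> a0 a1 d0 d1 N1 HK hu hY1 hY2.
set y := ln (N%:R : R) in hu hY1 hY2 *.
set x := a * y / N%:R.
set u := a * Sr * y / N%:R in hu.
have N0 : (0 : R) < N%:R by rewrite ltr0n; apply: leq_trans N1.
have N1' : (1 : R) < N%:R by rewrite ltr1n.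
have y0 : 0 < y by exact: ln_gt0.
have Ny : N%:R = expR y by rewrite /y lnK // posrE.
have x0 : 0 < x by rewrite /x divr_gt0 // mulr_gt0.
have xK : x * K%:R = a * y + u.
  by rewrite HK /x /u; field; exact: lt0r_neq0.
have ay : 1/d + 1 <= a * y by rewrite [a * y]mulrC -ler_pdivrMr.
move: hu; rewrite ler_norml => /andP [u1 u2].
have [xK1 dxK Eg1 td] := stepA d0 d1 ay u1 xK.
set t := expR (- (x * K%:R)) in td.
have t0 : 0 < t by exact: expR_gt0.
have xE : x = a * y * expR (- y) by rewrite /x Ny expRN.
have rho := stepRho a0 a1 d0 d1 y0 u2 hY2 xE xK.
have eu2 : expR u <= 1 + 2 * d.
  apply: le_trans (expR_small d (ltW d0) d1); by rewrite ler_expR.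
have dt0 : 0 < d * t by rewrite mulr_gt0.
set L := (Num.truncn (1 / (d * t))).+1.
have hL1 : 1 / (d * t) < L%:R by exact: truncnS_gt.
have hL2 : L%:R <= 1 / (d * t) + 1.
  by rewrite /L -natr1 lerD2r truncn_le divr_ge0 // ltW.
have xt : x / t = x * expR (x * K%:R) by rewrite /t expRN invrK.
have [tL xL] := stepL x0 d0 d1 t0 xt Eg1 rho hL1 hL2.
have LK : (L <= K)%N.
  have : x * L%:R < x * K%:R by apply: le_lt_trans xL dxK.
  by rewrite ltr_pM2l // ltr_nat => /ltnW.
set J := (K - L)%N.
have KJ : K = (J + L)%N by rewrite /J subnK.
set q := expR (- x).
have qn n : q ^+ n = expR (- x * n%:R) by rewrite expRM_natr.
have q0 : 0 <= q by exact: expR_ge0.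
have q1 : q <= 1 by rewrite /q -expR0 ler_expR oppr_le0 ltW.
have tq : q ^+ K = t by rewrite qn /t mulNr.
pose g k := mean_n0 k x.
have g0 : g 0%N = 0 by exact: mean0.
have gS k : g k.+1 = (1 - q ^+ k.+1) * (1 + g k) by rewrite /g mean_rec // qn.
have up := @g_up _ q g q0 q1 g0 gS K; rewrite tq in up.
have lo := @g_low _ q g q0 q1 g0 gS J L; rewrite -KJ in lo.
set s := q ^+ J in lo.
set qL := q ^+ L.
have ts : t = s * qL by rewrite -tq KJ exprD.
have qL1 : 1 - d <= qL.
  rewrite /qL qn; apply: le_trans (expR_ge1Dx _); rewrite mulNr lerD2l lerN2; exact: xL.
have qLle1 : qL <= 1 by rewrite /qL exprn_ile1.
have s0 : 0 <= s by rewrite /s exprn_ge0.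
have eu1 : 1 - d <= expR u by apply: le_trans (expR_ge1Dx u); rewrite lerD2l.
have pwE : N%:R `^ (- a) = expR u * t.
  rewrite /powR ifF; last exact/negbTE/lt0r_neq0.
  by rewrite -/y /t xK -expRD; congr expR; ring.
rewrite pwE -/(g K) -mulrA.
exact: (stepF d0 d1 t0 td ts qL1 qLle1 s0 lo up tL eu1 eu2).
Qed.

Theorem corollary3 (R : realType) (a : R) (S : nat -> int) :
  0 < a -> a < 1 ->
  (forall N : nat, 0 <= N%:Z + S N) ->
  (* S = o(N / ln N) *)
  (forall eps : R, 0 < eps ->
     \forall N \near \oo, `|(S N)%:~R| <= eps * (N%:R / ln N%:R)) ->
  (fun N : nat => N%:R `^ (- a) *
      mean_n0 (absz (N%:Z + S N)) (a * ln N%:R / N%:R)) @ \oo --> (1 : R).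
Proof.
move=> a0 a1 hS0 hS.
apply/cvgrPdist_le => eps eps0.
set d := Num.min (eps / 5) (1 / 4 : R).
have d0 : 0 < d by rewrite /d lt_min; apply/andP; split; lra.
have d1 : d <= 1 / 4 by rewrite /d ge_min; apply/orP; right.
have d5 : 5 * d <= eps.
  have : d <= eps / 5 by rewrite /d ge_min; apply/orP; left.
  lra.
set Y1 := (1 / d + 1) / a.
set Y2 := 16 * a / ((1 - a) ^+ 2 * d ^+ 2).
have Dp : 0 < 1 / d by rewrite divr_gt0.
have Y10 : 0 <= Y1 by rewrite /Y1 divr_ge0 ?ltW //; lra.
have Y20 : 0 <= Y2.
  apply: divr_ge0; first by apply: mulr_ge0; lra.
  by apply: mulr_ge0; apply: exprn_ge0; lra.
have da0 : 0 < d / a by rewrite divr_gt0.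
near=> N.
have hN : (1 < N)%N by near: N; exact: nbhs_infty_ge 2.
have hNY : expR (Y1 + Y2) <= N%:R by near: N; exact: nbhs_infty_ger.
have hSN : `|(S N)%:~R| <= (d / a) * (N%:R / ln N%:R) by near: N; exact: hS.
have N0 : (0 : R) < N%:R by rewrite ltr0n; lia.
have lnY : Y1 + Y2 <= ln (N%:R : R).
  by rewrite -[X in X <= _]expRK ler_ln ?posrE ?expR_gt0.
have y0 : 0 < ln (N%:R : R) by apply: ln_gt0; rewrite ltr1n.
have HK : (absz (N%:Z + S N))%:R = N%:R + (S N)%:~R :> R.
  by rewrite natr_absz ger0_norm // intrD.
apply: le_trans d5; apply: (core _ _ (S N)%:~R) => //; last 2 first.
- by rewrite -/Y1; lra.
- by rewrite -/Y2; lra.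
- have -> : a * (S N)%:~R * ln (N%:R : R) / N%:R = (S N)%:~R * (a * ln (N%:R : R) / N%:R) by ring.
  have p : 0 <= a * ln (N%:R : R) / N%:R by rewrite divr_ge0 ?mulr_ge0 ?ltW.
  rewrite normrM (ger0_norm p).
  apply: le_trans (ler_wpM2r p hSN) _.
  rewrite le_eqVlt; apply/orP; left; apply/eqP; field.
  by rewrite (lt0r_neq0 N0) (lt0r_neq0 y0) (lt0r_neq0 a0).
Unshelve. all: by end_near.
Qed.
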